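(* Assume $|C|<m$ and let $\mathcal S_1=\{(w_1+uw_2,w_3)\in\mathcal R^m: w_1\in\Delta_A,\ w_2\in\Delta_B,\ w_3\in\Delta_C^c\}$. Put $\epsilon=2$ if $A\subseteq B$ and $\epsilon=1$ if $A\not\subseteq B$. Then $\mathscr C_{\mathcal S_1}$ is a linear code over $R$ with parameters $$\big(q^{|A|+|B|}(q^m-q^{|C|}),\ q^{m+|A|+|A\cup B|},\ \epsilon(q-1)q^{|A|+|B|-1}(q^m-q^{|C|})\big),$$ and its Lee weight distribution is: weight $0$ with frequency $1$; weight $(q-1)q^{|A|+|B|-1}(q^m-q^{|C|})$ with frequency $2(q^{|A\cup B|-|B|}-1)$; weight $2(q-1)q^{|A|+|B|-1}(q^m-q^{|C|})$ with frequency $q^{m+|A|+|A\cup B|}-2q^{m-|C|+|A\cup B|-|B|}+q^{m-|C|}$; weight $(q-1)q^{|A|+|B|-1}(2q^m-q^{|C|})$ with frequency $2(q^{|A\cup B|-|B|}-1)(q^{m-|C|}-1)$; weight $2(q-1)q^{m+|A|+|B|-1}$ with frequency $q^{m-|C|}-1$. Consequently $\mathscr C_{\mathcal S_1}$ is a $2$-weight code if $A\subseteq B$ and a $4$-weight code if $A\not\subseteq B$.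
   Context: Let $q$ be a prime power, $\mathbb F_q$ the field of order $q$, $m\ge 2$ an integer and $[m]=\{1,\dots,m\}$. For $v\in\mathbb F_q^m$, $\mathrm{supp}(v)=\{i:v_i\ne0\}$ and $wt_H$ is Hamming weight. For nonempty $P\subseteq[m]$, $\Delta_P=\{v\in\mathbb F_q^m:\mathrm{supp}(v)\subseteq P\}$, $\Delta_P^c=\mathbb F_q^m\setminus\Delta_P$, $\Delta_P^*=\Delta_P\setminus\{\mathbf 0\}$. $A,B,C$ denote nonempty subsets of $[m]$. Let $R=\mathbb F_q[u]/\langle u^2\rangle$ and $\mathcal R=R\times\mathbb F_q$; each element of $\mathcal R^m$ is uniquely $(d+ue,f)$ with $d,e,f\in\mathbb F_q^m$. Define $\langle(d_1+ue_1,f_1),(d_2+ue_2,f_2)\rangle=(d_1+ue_1)\cdot(d_2+ue_2)+u\,f_1\cdot f_2\in R$, where $x\cdot y=\sum_i x_iy_i$. For a nonempty $\mathcal D\subseteq\mathcal R^m$ listed in a fixed order, $\mathscr C_{\mathcal D}=\{(\langle r,s\rangle)_{s\in\mathcal D}: r\in\mathcal R^m\}\subseteq R^{|\mathcal D|}$, an $R$-submodule (linear code over $R$). The Gray map $\Phi:R^n\to\mathbb F_q^{2n}$ is $\Phi(d+ue)=(e,d+e)$ for $d,e\in\mathbb F_q^n$; the Lee weight is $wt_L(x)=wt_H(\Phi(x))$. A code over $R$ has parameters $(n,K,D)$ if it has length $n$, cardinality $K$ and minimum nonzero Lee weight $D$. A $t$-weight code has exactly $t$ distinct nonzero weights. If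 two listed weight values coincide, their frequencies are added. *)

(* Defs.v *)
From mathcomp Require Import all_boot all_algebra.
Set Implicit Arguments. Unset Strict Implicit. Unset Printing Implicit Defensive.
Import GRing.Theory.
Local Open Scope ring_scope.

Section Defs.
Variables (F : finFieldType) (m : nat).

Definition vec := {ffun 'I_m -> F}.

Definition dot (x y : vec) : F := \sum_(i < m) x i * y i.

Definition Delta (P : {set 'I_m}) : {set vec} :=
  [set v : vec | [forall i, (v i != 0) ==> (i \in P)]].

(* R = F[u]/<u^2>; the pair (d, e) represents d + u e *)
Definition Rel := (F * F)%type.
Definition addR (x y : Rel) : Rel := (x.1 + y.1, x.2 + y.2).
Definition mulR (x y : Rel) : Rel := (x.1 * y.1, x.1 * y.2 + x.2 * y.1).
Definition zeroR : Rel := (0, 0).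

(* an element of calR^m = (R x F_q)^m is uniquely (d + u e, f), stored as ((d, e), f) *)
Definition elt := ((vec * vec) * vec)%type.

(* <(d1+ue1,f1),(d2+ue2,f2)> = (d1+ue1).(d2+ue2) + u f1.f2 *)
Definition ip (r s : elt) : Rel :=
  (dot r.1.1 s.1.1,
   dot r.1.1 s.1.2 + dot r.1.2 s.1.1 + dot r.2 s.2).

(* codewords of length |D| indexed by the elements of D (entries outside D are 0);
   this is an order-independent encoding of words in R^{|D|} *)
Definition word := {ffun elt -> Rel}.

Definition codeword (D : {set elt}) (r : elt) : word :=
  [ffun s => if s \in D then ip r s else zeroR].

Definition code (D : {set elt}) : {set word} :=
  [set codeword D r | r : elt].

(* Lee weight of d + u e : Hamming weight of the Gray image (e, d + e) *)
Definition leeR (x : Rel) : nat := (x.2 != 0) + (x.1 + x.2 != 0).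

Definition lee (D : {set elt}) (c : word) : nat := \sum_(s in D) leeR (c s).

Definition zero_word : word := [ffun _ => zeroR].

Definition is_linear_code (D : {set elt}) (S : {set word}) : Prop :=
  [/\ zero_word \in S,
      forall c1 c2, c1 \in S -> c2 \in S -> [ffun s => addR (c1 s) (c2 s)] \in S &
      forall (a : Rel) c, c \in S -> [ffun s => if s \in D then mulR a (c s) else zeroR] \in S].

Definition min_lee (D : {set elt}) (S : {set word}) (d : nat) : Prop :=
  (exists2 c, c \in S & (c != zero_word) /\ lee D c = d) /\
  (forall c, c \in S -> c != zero_word -> (d <= lee D c)%N).

Definition freq (D : {set elt}) (S : {set word}) (w : nat) : nat :=
  #|[set c in S | lee D c == w]|.

Definition num_weights (D : {set elt}) (S : {set word}) : nat :=
  size (undup [seq lee D c | c <- enum S & c != zero_word]).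

End Defs.

Definition S1 (F : finFieldType) (m : nat) (A B C : {set 'I_m}) : {set elt F m} :=
  [set s : elt F m | [&& s.1.1 \in Delta F A, s.1.2 \in Delta F B & s.2 \notin Delta F C]].

(* Main.v *)
Require Import Defs.
From mathcomp Require Import all_boot all_algebra.
From mathcomp Require Import zify ring.
Set Implicit Arguments. Unset Strict Implicit. Unset Printing Implicit Defensive.
Import GRing.Theory.
Local Open Scope ring_scope.

Section Vec.
Variables (F : finFieldType) (m : nat).
Local Notation vec := (vec F m).
Local Notation dot := (@dot F m).

Definition vadd (v w : vec) : vec := [ffun i => v i + w i].
Definition vscale (k : F) (v : vec) : vec := [ffun i => k * v i].
Definition vzero : vec := [ffun _ => 0].
Definition vdelta (i : 'I_m) (x : F) : vec := [ffun j => if j == i then x else 0].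
Definition nzon (P : {set 'I_m}) (v : vec) := [exists i in P, v i != 0].

Lemma dotDl v v' w : dot (vadd v v') w = dot v w + dot v' w.
Proof. by rewrite /Defs.dot -big_split; apply: eq_bigr => i _; rewrite ffunE mulrDl. Qed.
Lemma dotDr v w w' : dot v (vadd w w') = dot v w + dot v w'.
Proof. by rewrite /Defs.dot -big_split; apply: eq_bigr => i _; rewrite ffunE mulrDr. Qed.
Lemma dotZl k v w : dot (vscale k v) w = k * dot v w.
Proof. by rewrite /Defs.dot mulr_sumr; apply: eq_bigr => i _; rewrite ffunE mulrA. Qed.
Lemma dot0l w : dot vzero w = 0.
Proof. by rewrite /Defs.dot big1 // => i _; rewrite ffunE mul0r. Qed.
Lemma dot_deltar v i x : dot v (vdelta i x) = v i * x.
Proof.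
rewrite /Defs.dot (bigD1 i) //= ffunE eqxx big1 ?addr0 // => j ji.
by rewrite ffunE (negbTE ji) mulr0.
Qed.
Lemma dot_deltal i x w : dot (vdelta i x) w = x * w i.
Proof.
rewrite /Defs.dot (bigD1 i) //= ffunE eqxx big1 ?addr0 // => j ji.
by rewrite ffunE (negbTE ji) mul0r.
Qed.

Lemma inDelta (P : {set 'I_m}) (v : vec) : (v \in Delta F P) = [forall i, (v i != 0) ==> (i \in P)].
Proof. by rewrite inE. Qed.

Lemma DeltaP (P : {set 'I_m}) (v : vec) : reflect (forall i, i \notin P -> v i = 0) (v \in Delta F P).
Proof.
rewrite inDelta; apply: (iffP forallP) => H i.
  move=> iP; apply/eqP; case: (boolP (v i == 0)) => // vi; by have := implyP (H i) vi; rewrite (negbTE iP).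
apply/implyP => vi; apply: contraR vi => /H ->; by rewrite eqxx.
Qed.

Lemma card_Delta (P : {set 'I_m}) : #|Delta F P| = (#|F| ^ #|P|)%N.
Proof.
rewrite -(card_pffun_on (0:F) P (predT : pred F)).
apply: eq_card => v; rewrite inDelta.
apply/forallP/pffun_onP => [H|[H _] i].
  split=> //; apply/subsetP => i; rewrite inE => /(implyP (H i)) //.
apply/implyP => vi; apply: (subsetP H); by rewrite inE.
Qed.

Lemma dot_supp (P : {set 'I_m}) v w : ~~ nzon P v -> w \in Delta F P -> dot v w = 0.
Proof.
move=> /existsPn nz /DeltaP wP; rewrite /Defs.dot big1 // => i _.
case: (boolP (i \in P)) => iP.
  by have := nz i; rewrite iP /= negbK => /eqP ->; rewrite mul0r.
by rewrite wP // mulr0.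
Qed.

Lemma Delta_add (P : {set 'I_m}) v w : v \in Delta F P -> w \in Delta F P -> vadd v w \in Delta F P.
Proof. move=> /DeltaP H1 /DeltaP H2; apply/DeltaP => i iP; by rewrite ffunE H1 ?H2 ?addr0. Qed.

Lemma Delta_delta (P : {set 'I_m}) i x : i \in P -> vdelta i x \in Delta F P.
Proof. move=> iP; apply/DeltaP => j jP; rewrite ffunE; case: eqP => // ji; by move: jP; rewrite ji iP. Qed.

Lemma vadd_delta_K v i x : vadd (vadd v (vdelta i x)) (vdelta i (- x)) = v.
Proof. apply/ffunP => j; rewrite !ffunE; case: eqP => _; by rewrite ?addrK ?addr0. Qed.

End Vec.

Section Fiber.
Variables (F : finFieldType).
Lemma fiber_uniform (T : finType) (S : {set T}) (phi : T -> F) (tau : F -> T -> T) :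
  (forall t s, s \in S -> tau t s \in S) ->
  (forall t s, phi (tau t s) = phi s + t) ->
  (forall t s, tau (-t) (tau t s) = s) ->
  #|S| = muln #|F| #|[set s in S | phi s == 0]|.
Proof.
move=> HS Hphi Hc.
have HZ c : #|[set s in S | phi s == c]| = #|[set s in S | phi s == 0]|.
  have Hc' s : tau c (tau (-c) s) = s by have := Hc (-c) s; rewrite opprK.
  have -> : [set s in S | phi s == c] = tau c @: [set s in S | phi s == 0].
    apply/setP => s; apply/idP/imsetP.
      rewrite inE => /andP[sS /eqP ps]; exists (tau (-c) s); last by rewrite Hc'.
      by rewrite inE HS //= Hphi ps subrr.
    move=> [s' ]; rewrite inE => /andP[s'S /eqP ps'] ->.
    by rewrite inE HS //= Hphi ps' add0r.
  rewrite card_imset //; exact: (can_inj (Hc c)).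
rewrite -sum1_card (partition_big phi predT) //=.
rewrite (eq_bigr (fun _ => #|[set s in S | phi s == 0]|)) ?sum_nat_const //.
move=> c _; rewrite -(HZ c) -sum1_card; apply: eq_bigl => s; by rewrite inE.
Qed.

Lemma card_split (T : finType) (X : {set T}) (P Q : pred T) :
  #|[set s in X | P s]| = (#|[set s in X | P s && Q s]| + #|[set s in X | P s && ~~ Q s]|)%N.
Proof.
rewrite -(cardsID [set s | Q s] [set s in X | P s]); congr (_ + _)%N;
  apply: eq_card => s; rewrite !inE; by case: (s \in X); case: (P s); case: (Q s).
Qed.

Lemma nz_count (T : finType) (S : {set T}) (phi : T -> F) (tau : F -> T -> T) N :
  (forall t s, s \in S -> tau t s \in S) ->
  (forall t s, phi (tau t s) = phi s + t) ->
  (forall t s, tau (-t) (tau t s) = s) ->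
  #|S| = muln #|F| N ->
  #|[set s in S | phi s != 0]| = muln (#|F| - 1) N.
Proof.
move=> H1 H2 H3 HN.
have HS := fiber_uniform H1 H2 H3.
have q0 : (0 < #|F|)%N by apply/card_gt0P; exists 0.
have HZ : #|[set s in S | phi s == 0]| = N by apply/eqP; rewrite -(eqn_pmul2l q0) -HS HN.
have := card_split S predT (fun s => phi s == 0); rewrite /= HZ.
have -> : [set s in S | true] = S by apply/setP => s; rewrite inE andbT.
rewrite HN mulnBl mul1n => ->; by rewrite addKn.
Qed.
End Fiber.

Section Main.
Variables (F : finFieldType) (m : nat) (A B C : {set 'I_m}).
Local Notation vec := (vec F m).
Local Notation dot := (@dot F m).
Local Notation elt := (elt F m).
Local Notation D := (S1 F A B C).
Local Notation q := #|F|.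
Local Notation vzero := (@vzero F m).

Lemma card_vec : #|{: vec}| = (q ^ m)%N.
Proof. by rewrite card_ffun card_ord. Qed.

Lemma S1E : D = setX (setX (Delta F A) (Delta F B)) (~: Delta F C).
Proof. apply/setP => [[[x y] z]]; by rewrite inE !in_setX in_setC /= andbA. Qed.

Lemma card_compl (X : {set vec}) : #|~: X| = (q ^ m - #|X|)%N.
Proof. by rewrite -card_vec -(cardsC X) addKn. Qed.

Lemma card_D : #|D| = (q ^ #|A| * q ^ #|B| * (q ^ m - q ^ #|C|))%N.
Proof. by rewrite S1E !cardsX card_compl !card_Delta. Qed.

Definition phi (al be f : vec) (s : elt) := dot al s.1.1 + dot be s.1.2 + dot f s.2.
Definition NZ al be f := #|[set s in D | phi al be f s != 0]|.

Lemma q_gt1 : (1 < q)%N.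
Proof.
rewrite -cardsT.
apply/(@card_gt1P F [set: F]); exists 0, 1; rewrite !inE; split => //; rewrite eq_sym; exact: oner_neq0.
Qed.

Lemma NZ_A al be f : A != set0 -> nzon A al ->
  NZ al be f = ((q - 1) * (q ^ (#|A| + #|B| - 1) * (q ^ m - q ^ #|C|)))%N.
Proof.
move=> A0 /existsP[i /andP[iA ai]].
apply: (@nz_count F _ _ _ (fun t (s : elt) => ((vadd s.1.1 (vdelta i (t / al i)), s.1.2), s.2))).
- move=> t [[w1 w2] w3]; rewrite S1E !in_setX in_setC /= => /andP[/andP[h1 h2] h3].
  by rewrite h2 h3 Delta_add // Delta_delta.
- move=> t s; rewrite /phi /= dotDr dot_deltar mulrC divfK //; ring.
- by move=> t [[w1 w2] w3] /=; rewrite mulNr vadd_delta_K.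
- have a0 : (0 < #|A|)%N by rewrite card_gt0.
  rewrite card_D -expnD mulnA -expnS; congr (_ ^ _ * _)%N; lia.
Qed.

Lemma NZ_B al be f : B != set0 -> A != set0 -> nzon B be ->
  NZ al be f = ((q - 1) * (q ^ (#|A| + #|B| - 1) * (q ^ m - q ^ #|C|)))%N.
Proof.
move=> B0 A0 /existsP[i /andP[iB bi]].
apply: (@nz_count F _ _ _ (fun t (s : elt) => ((s.1.1, vadd s.1.2 (vdelta i (t / be i))), s.2))).
- move=> t [[w1 w2] w3]; rewrite S1E !in_setX in_setC /= => /andP[/andP[h1 h2] h3].
  by rewrite h1 h3 Delta_add // Delta_delta.
- move=> t s; rewrite /phi /= dotDr dot_deltar mulrC divfK //; ring.
- by move=> t [[w1 w2] w3] /=; rewrite mulNr vadd_delta_K.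
- have a0 : (0 < #|A|)%N by rewrite card_gt0.
  rewrite card_D -expnD mulnA -expnS; congr (_ ^ _ * _)%N; lia.
Qed.

Lemma NZ_f al be f : ~~ nzon A al -> ~~ nzon B be ->
  NZ al be f = (q ^ #|A| * q ^ #|B| * #|[set w in ~: Delta F C | dot f w != 0%R]|)%N.
Proof.
move=> nA nB; rewrite /NZ -!card_Delta -!cardsX; apply: eq_card => -[[w1 w2] w3].
rewrite S1E !inE -!inDelta /phi /= -!andbA.
case: (boolP (w1 \in Delta F A)) => //= h1; case: (boolP (w2 \in Delta F B)) => //= h2.
by rewrite (dot_supp nA h1) (dot_supp nB h2) !add0r.
Qed.

Lemma Delta_T (w : vec) : w \in Delta F [set: 'I_m].
Proof. by apply/DeltaP => i; rewrite inE. Qed.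

Lemma count_all (f : vec) (i : 'I_m) : f i != 0 ->
  #|[set w in [set: vec] | dot f w != 0%R]| = ((q - 1) * q ^ (m - 1))%N.
Proof.
move=> fi.
apply: (@nz_count F _ _ _ (fun t (w : vec) => vadd w (vdelta i (t / f i)))).
- by move=> t w; rewrite !inE.
- by move=> t w; rewrite dotDr dot_deltar mulrC divfK.
- by move=> t w; rewrite mulNr vadd_delta_K.
- have m0 : (0 < m)%N by apply: leq_ltn_trans (ltn_ord i).
  by rewrite cardsT card_vec -expnS; congr (_ ^ _)%N; lia.
Qed.

Lemma count_C (f : vec) : 
  #|[set w in Delta F C | dot f w != 0%R]| = if nzon C f then ((q - 1) * q ^ (#|C| - 1))%N else 0%N.
Proof.
case: ifP => [/existsP[i /andP[iC fi]] | /negbT nC].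
  apply: (@nz_count F _ _ _ (fun t (w : vec) => vadd w (vdelta i (t / f i)))).
  - by move=> t w wC; rewrite Delta_add // Delta_delta.
  - by move=> t w; rewrite dotDr dot_deltar mulrC divfK.
  - by move=> t w; rewrite mulNr vadd_delta_K.
  - have c0 : (0 < #|C|)%N by apply/card_gt0P; exists i.
    by rewrite card_Delta -expnS; congr (_ ^ _)%N; lia.
apply/eqP; rewrite cards_eq0; apply/eqP/setP => w; rewrite in_set0 in_set.
by case: (boolP (w \in Delta F C)) => //= wC; rewrite (dot_supp nC wC) eqxx.
Qed.

Lemma count_notC (f : vec) :
  #|[set w in ~: Delta F C | dot f w != 0%R]| =
  (#|[set w in [set: vec] | dot f w != 0%R]| - #|[set w in Delta F C | dot f w != 0%R]|)%N.
Proof.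
rewrite (card_split [set: vec] (fun w => dot f w != 0%R) (fun w => w \in Delta F C)) /=.
have -> : [set w in Delta F C | dot f w != 0%R] = [set s in [set: vec] | (dot f s != 0%R) && (s \in Delta F C)].
  by apply/setP => w; rewrite !inE andbC.
rewrite addKn; apply: eq_card => w; by rewrite !inE andbC.
Qed.


Definition W1v := ((q - 1) * (q ^ (#|A| + #|B| - 1) * (q ^ m - q ^ #|C|)))%N.
Definition Whv := ((q - 1) * q ^ (m + #|A| + #|B| - 1))%N.

Lemma NZ_val al be f : A != set0 -> B != set0 -> (0 < m)%N ->
  NZ al be f = if nzon A al || nzon B be then W1v
               else if nzon [set: 'I_m] f then (if nzon C f then W1v else Whv) else 0%N.
Proof.
move=> A0 B0 m0.
case: (boolP (nzon A al)) => [hA|nA] /=; first exact: NZ_A.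
case: (boolP (nzon B be)) => [hB|nB] /=; first exact: NZ_B.
rewrite NZ_f //.
case: ifP => [/existsP[i /andP[_ fi]] | /negbT nT].
  rewrite count_notC (count_all fi) count_C.
  have a0 : (0 < #|A|)%N by rewrite card_gt0.
  have eab : (q ^ #|A| * q ^ #|B| = q * q ^ (#|A| + #|B| - 1))%N.
    by rewrite -expnD -expnS; congr (_ ^ _)%N; lia.
  have em : (q ^ m = q * q ^ (m - 1))%N by rewrite -expnS; congr (_ ^ _)%N; lia.
  case: ifP => [/existsP[j /andP[jC _]] | _].
    have c0 : (0 < #|C|)%N by apply/card_gt0P; exists j.
    have ec : (q ^ #|C| = q * q ^ (#|C| - 1))%N by rewrite -expnS; congr (_ ^ _)%N; lia.
    rewrite /W1v eab em ec -mulnBr -!mulnBr.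
    set X := (q ^ (#|A| + #|B| - 1))%N; set R := (q ^ (m - 1) - q ^ (#|C| - 1))%N.
    set q1 := (#|F| - 1)%N; ring.
  have e : (q ^ (m + #|A| + #|B| - 1) = q ^ #|A| * q ^ #|B| * q ^ (m - 1))%N by rewrite -!expnD; congr (_ ^ _)%N; lia.
  rewrite /Whv subn0 e; ring.
have -> : [set w in ~: Delta F C | dot f w != 0%R] = set0.
  by apply/setP => w; rewrite in_set0 in_set (dot_supp nT (Delta_T w)) eqxx andbF.
by rewrite cards0 muln0.
Qed.


Lemma sum_bool_card (T : finType) (X : {set T}) (P : pred T) :
  (\sum_(s in X) nat_of_bool (P s))%N = #|[set s in X | P s]|.
Proof.
rewrite -sum1_card big_mkcond [RHS]big_mkcond; apply: eq_bigr => s _.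
by rewrite inE; case: (s \in X); case: (P s).
Qed.

Lemma lee_cw (d e f : vec) :
  lee D (codeword D ((d, e), f)) = (NZ e d f + NZ (vadd d e) d f)%N.
Proof.
rewrite /lee (eq_bigr (fun s => leeR (ip ((d, e), f) s))); last first.
  by move=> s sD; rewrite ffunE sD.
rewrite /leeR big_split /= !sum_bool_card /NZ; congr (_ + _)%N; apply: eq_card => s;
  rewrite !inE /phi /=.
  by rewrite [dot d _ + _]addrC.
rewrite dotDl; congr (_ && (_ != _)); ring.
Qed.


Definition restr (P : {set 'I_m}) (v : vec) : vec := [ffun i => if i \in P then v i else 0].
Definition Nset : {set elt} :=
  [set r : elt | (r.1.1 \in Delta F (A :|: B)) && (r.1.2 \in Delta F A)].
Definition norm (r : elt) : elt := ((restr (A :|: B) r.1.1, restr A r.1.2), r.2).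

Lemma dot_restr (P : {set 'I_m}) v w : w \in Delta F P -> dot (restr P v) w = dot v w.
Proof.
move=> /DeltaP wP; apply: eq_bigr => i _; rewrite ffunE.
by case: ifP => // /negbT iP; rewrite wP // !mulr0.
Qed.

Lemma Delta_sub (P Q : {set 'I_m}) w : P \subset Q -> w \in Delta F P -> w \in Delta F Q.
Proof.
move=> PQ /DeltaP wP; apply/DeltaP => i iQ; apply: wP; apply: contra iQ; exact: (subsetP PQ).
Qed.

Lemma restr_Delta (P : {set 'I_m}) v : restr P v \in Delta F P.
Proof. by apply/DeltaP => i iP; rewrite ffunE (negbTE iP). Qed.

Lemma cw_norm r : codeword D (norm r) = codeword D r.
Proof.
apply/ffunP => -[[w1 w2] w3]; rewrite !ffunE; case: ifP => // sD.
move: sD; rewrite S1E !in_setX in_setC => /andP[/andP[h1 h2] _].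
have h1' : w1 \in Delta F (A :|: B) by apply: Delta_sub h1; exact: subsetUl.
have h2' : w2 \in Delta F (A :|: B) by apply: Delta_sub h2; exact: subsetUr.
by rewrite /ip /= !dot_restr.
Qed.

Lemma norm_in r : norm r \in Nset.
Proof. by rewrite inE /= !restr_Delta. Qed.

Lemma code_eq : code D = codeword D @: Nset.
Proof.
apply/setP => c; apply/imsetP/imsetP => -[r rN ->]; last by exists r.
by exists (norm r); rewrite ?norm_in ?cw_norm.
Qed.

Lemma dot0r v : dot v vzero = 0.
Proof. by rewrite /Defs.dot big1 // => i _; rewrite ffunE mulr0. Qed.

Lemma vzero_Delta (P : {set 'I_m}) : vzero \in Delta F P.
Proof. by apply/DeltaP => i _; rewrite ffunE. Qed.

Lemma cw_inj : (#|C| < m)%N -> {in Nset &, injective (codeword D)}.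
Proof.
move=> Cm [[d e] f] [[d' e'] f'] rN r'N E.
have [j jC] : exists j, j \notin C.
  have : (0 < #|~: C|)%N by have := cardsC C; rewrite card_ord; lia.
  by move=> /card_gt0P[j]; rewrite inE; exists j.
have H s : s \in D -> ip ((d, e), f) s = ip ((d', e'), f') s.
  by move=> sD; have := congr1 (fun c : word F m => c s) E; rewrite !ffunE sD.
have dj : vdelta j (1 : F) \notin Delta F C.
  apply/DeltaP => /(_ j jC); rewrite ffunE eqxx; exact/eqP/oner_neq0.
have Hf : forall i, f i = f' i.
  have fj : f j = f' j.
    have := H ((vzero, vzero), vdelta j 1).
    rewrite S1E !in_setX in_setC !vzero_Delta dj => /(_ isT) /(congr1 snd).
    by rewrite /ip /= !dot0r !dot_deltar !add0r !mulr1.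
  move=> i; case: (eqVneq i j) => [-> //| ij].
  have := H ((vzero, vzero), vadd (vdelta j 1) (vdelta i 1)).
  have dji : vadd (vdelta j (1 : F)) (vdelta i 1) \notin Delta F C.
    apply/DeltaP => /(_ j jC); rewrite !ffunE eqxx eq_sym (negbTE ij) addr0; exact/eqP/oner_neq0.
  rewrite S1E !in_setX in_setC !vzero_Delta dji => /(_ isT) /(congr1 snd).
  rewrite /ip /= !dot0r !dotDr !dot_deltar !add0r !mulr1 fj; exact: addrI.
have HB : forall i, i \in B -> d i = d' i.
  move=> i iB; have := H ((vzero, vdelta i 1), vdelta j 1).
  rewrite S1E !in_setX in_setC !vzero_Delta dj Delta_delta // => /(_ isT) /(congr1 snd).
  by rewrite /ip /= !dot0r !dot_deltar !addr0 !mulr1 Hf => /addIr.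
have HA : forall i, i \in A -> d i = d' i /\ e i = e' i.
  move=> i iA; have := H ((vdelta i 1, vzero), vdelta j 1).
  rewrite S1E !in_setX in_setC !vzero_Delta dj Delta_delta // => /(_ isT) [].
  by rewrite /ip /= !dot0r !dot_deltar !add0r !mulr1 Hf => -> /addIr.
have /andP[/DeltaP hd /DeltaP he] : (d \in Delta F (A :|: B)) && (e \in Delta F A) by move: rN; rewrite inE.
have /andP[/DeltaP hd' /DeltaP he'] : (d' \in Delta F (A :|: B)) && (e' \in Delta F A) by move: r'N; rewrite inE.
congr ((_, _), _); apply/ffunP => i.
- case: (boolP (i \in A :|: B)) => [|iAB]; last by rewrite hd ?hd'.
  by rewrite inE => /orP[/HA[]|/HB].
- case: (boolP (i \in A)) => [/HA[]|iA] //; by rewrite he ?he'.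
- exact: Hf.
Qed.


Lemma nzonP (P : {set 'I_m}) (v : vec) : reflect (forall i, i \in P -> v i = 0) (~~ nzon P v).
Proof.
apply: (iffP existsPn) => H i.
  by move=> iP; have := H i; rewrite iP /= negbK => /eqP.
by apply/negP => /andP[iP /eqP]; apply; apply: H.
Qed.

Lemma Delta_nz (P Q : {set 'I_m}) (v : vec) :
  (v \in Delta F P) && ~~ nzon Q v = (v \in Delta F (P :\: Q)).
Proof.
apply/andP/DeltaP => [[/DeltaP h1 /nzonP h2] i|H].
  rewrite inE negb_and negbK => /orP[/h2|/h1] //.
split; first by apply/DeltaP => i iP; apply: H; rewrite inE (negbTE iP) andbF.
by apply/nzonP => i iQ; apply: H; rewrite inE iQ.
Qed.

Lemma Delta_zero (P : {set 'I_m}) (v : vec) :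
  (v \in Delta F P) && ~~ nzon P v = (v == vzero).
Proof.
rewrite Delta_nz setDv; apply/DeltaP/eqP => [H|-> i _]; last by rewrite ffunE.
by apply/ffunP => i; rewrite ffunE H // inE.
Qed.

Definition g1 (de : vec * vec) := nzon A de.2 || nzon B de.1.
Definition g2 (de : vec * vec) := nzon A (vadd de.1 de.2) || nzon B de.1.
Definition Np : {set vec * vec} := setX (Delta F (A :|: B)) (Delta F A).
Definition nde x y := #|[set de in Np | (g1 de == x) && (g2 de == y)]|.
Definition nf u v := #|[set f : vec | (nzon [set: 'I_m] f == u) && (nzon C f == v)]|.

Lemma card_Np : #|Np| = (q ^ #|A :|: B| * q ^ #|A|)%N.
Proof. by rewrite cardsX !card_Delta. Qed.

Lemma nde_FF : nde false false = 1%N.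
Proof.
rewrite /nde -(cards1 (vzero, vzero)); apply: eq_card => -[d e].
rewrite !inE -!inDelta /g1 /g2 /= !eqbF_neg !negb_or xpair_eqE.
apply/idP/idP => [/andP[/andP[hd he] /andP[/andP[heA hdB] /andP[hdeA _]]]|/andP[/eqP -> /eqP ->]].
  have e0 : e = vzero by apply/eqP; rewrite -(Delta_zero A) he heA.
  rewrite e0 eqxx andbT; apply/eqP/ffunP => i; rewrite ffunE.
  case: (boolP (i \in A)) => iA.
    by move/nzonP: hdeA => /(_ i iA); rewrite e0 !ffunE addr0.
  case: (boolP (i \in B)) => iB; first by move/nzonP: hdB; apply.
  by move/DeltaP: hd; apply; rewrite inE negb_or iA iB.
have Z P : ~~ nzon P vzero by apply/nzonP => i _; rewrite ffunE.
have Z2 : vadd vzero vzero = vzero by apply/ffunP => i; rewrite !ffunE addr0.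
by rewrite !vzero_Delta Z2 !Z.
Qed.


Lemma card_ABB : #|(A :|: B) :\: B| = (#|A :|: B| - #|B|)%N.
Proof. by rewrite cardsDS // subsetUr. Qed.

Lemma nde_g1F : #|[set de in Np | g1 de == false]| = (q ^ (#|A :|: B| - #|B|))%N.
Proof.
rewrite -card_ABB -card_Delta -[(#|Delta _ _|)]muln1 -(cards1 vzero) -cardsX.
apply: eq_card => -[d e]; rewrite !inE -!inDelta /g1 /= eqbF_neg negb_or.
rewrite -(Delta_nz _ B) -(Delta_zero A).
case: (nzon A e); case: (nzon B d); by rewrite /= ?andbF ?andbT.
Qed.

Definition negA (d : vec) : vec := [ffun i => if i \in A then - d i else 0].

Lemma nde_g2F : #|[set de in Np | g2 de == false]| = (q ^ (#|A :|: B| - #|B|))%N.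
Proof.
rewrite -card_ABB -card_Delta.
have -> : [set de in Np | g2 de == false] = (fun d => (d, negA d)) @: Delta F ((A :|: B) :\: B).
  apply/setP => -[d e]; rewrite !inE -!inDelta /g2 /= eqbF_neg negb_or.
  apply/idP/imsetP => [/andP[/andP[hd he] /andP[hA hB]]|[d' hd' [-> ->]]].
    exists d; first by rewrite -Delta_nz hd hB.
    congr (_, _); apply/ffunP => i; rewrite ffunE; case: ifP => iA.
      by move/nzonP: hA => /(_ i iA); rewrite ffunE addrC => /eqP; rewrite addr_eq0 => /eqP.
    by move/DeltaP: he; apply; rewrite iA.
  move: hd'; rewrite -Delta_nz => /andP[-> ->]; rewrite andbT /=.
  apply/andP; split; first by apply/DeltaP => i iA; rewrite ffunE (negbTE iA).
  by apply/nzonP => i iA; rewrite !ffunE iA subrr.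
by rewrite card_imset // => x y /(congr1 fst).
Qed.


Lemma card4 (T : finType) (X : {set T}) (P Q : pred T) :
  let n x y := #|[set s in X | (P s == x) && (Q s == y)]| in
  [/\ #|X| = (n false false + n false true + n true false + n true true)%N,
      #|[set s in X | P s == false]| = (n false false + n false true)%N &
      #|[set s in X | Q s == false]| = (n false false + n true false)%N].
Proof.
move=> n; rewrite /n -!sum_bool_card -sum1_card -!big_split /=.
split; apply: eq_bigr => s _; by case: (P s); case: (Q s).
Qed.

Lemma nf_FF : nf false false = 1%N.
Proof.
rewrite /nf -(cards1 vzero); apply: eq_card => f; rewrite !inE !eqbF_neg.
have := Delta_zero [set: 'I_m] f; rewrite Delta_T /= => ->.
case: eqP => [->|] //=; apply: (introT (nzonP C vzero)) => i _; by rewrite ffunE.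
Qed.

Lemma nf_FT : nf false true = 0%N.
Proof.
apply/eqP; rewrite cards_eq0; apply/eqP/setP => f; rewrite !inE !eqbF_neg.
have := Delta_zero [set: 'I_m] f; rewrite Delta_T /= => ->.
case: eqP => [->|] //=; rewrite eqb_id; apply/negbTE/nzonP => i _; by rewrite ffunE.
Qed.

Lemma nf_sum :
  [/\ (q ^ m = nf false false + nf false true + nf true false + nf true true)%N &
      (q ^ (m - #|C|) = nf false false + nf true false)%N].
Proof.
have [H1 _ H3] := card4 [set: vec] (fun f => nzon [set: 'I_m] f) (fun f => nzon C f).
have E u v : nf u v = #|[set s in [set: vec] | (nzon [set: 'I_m] s == u) && (nzon C s == v)]|.
  by apply: eq_card => f; rewrite !inE.
rewrite !E -H3 -H1 cardsT card_vec; split => //.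
have -> : (m - #|C|)%N = #|~: C| by have := cardsC C; rewrite card_ord; lia.
rewrite -card_Delta; apply: eq_card => f; rewrite !inE -inDelta eqbF_neg.
have := Delta_nz [set: 'I_m] C f; rewrite Delta_T /= setTD => <-.
by [].
Qed.


Definition hv (g u v : bool) := if g then W1v else if u then (if v then W1v else Whv) else 0%N.
Definition cls (r : elt) := ((g1 r.1, g2 r.1), (nzon [set: 'I_m] r.2, nzon C r.2)).
Definition Wk (k : (bool * bool) * (bool * bool)) := (hv k.1.1 k.2.1 k.2.2 + hv k.1.2 k.2.1 k.2.2)%N.

Lemma wt_cls r : A != set0 -> B != set0 -> (0 < m)%N -> lee D (codeword D r) = Wk (cls r).
Proof. by move: r => [[d e] f] A0 B0 m0; rewrite lee_cw !NZ_val. Qed.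

Lemma cls_count x y u v :
  #|[set r in Nset | cls r == ((x, y), (u, v))]| = (nde x y * nf u v)%N.
Proof.
rewrite /nde /nf -cardsX; apply: eq_card => -[[d e] f].
rewrite !inE -!inDelta /cls /= !xpair_eqE.
by rewrite -!andbA.
Qed.

Lemma freq_eq w : A != set0 -> B != set0 -> (#|C| < m)%N ->
  freq D (code D) w =
  (\sum_(k : (bool * bool) * (bool * bool)) (Wk k == w) * (nde k.1.1 k.1.2 * nf k.2.1 k.2.2))%N.
Proof.
move=> A0 B0 Cm; have m0 : (0 < m)%N by lia.
rewrite /freq code_eq.
have -> : [set c in codeword D @: Nset | lee D c == w] =
          codeword D @: [set r in Nset | lee D (codeword D r) == w].
  apply/setP => c; apply/idP/imsetP => [|[r] ].
    by rewrite inE => /andP[/imsetP[r rN ->] h]; exists r => //; rewrite inE rN.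
  move=> /setIdP[rN h] ->; apply/setIdP; split => //; apply/imsetP; by exists r.
rewrite card_in_imset; last first.
  by move=> r r' /setIdP[rN _] /setIdP[r'N _]; apply: cw_inj.
rewrite -sum_bool_card.
rewrite (eq_bigr (fun r => \sum_(k : (bool * bool) * (bool * bool)) (Wk k == w) * (cls r == k))%N); last first.
  move=> r _; rewrite (bigD1 (cls r)) //= eqxx muln1 big1 ?addn0 ?wt_cls //.
  by move=> k /negbTE; rewrite eq_sym => ->; rewrite muln0.
rewrite exchange_big /=; apply: eq_bigr => k _.
by rewrite -big_distrr /= sum_bool_card; case: k => [[x y] [u v]]; rewrite cls_count.
Qed.


Lemma lin_code : is_linear_code D (code D).
Proof.
split.
- apply/imsetP; exists ((vzero, vzero), vzero) => //; apply/ffunP => s; rewrite !ffunE.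
  by case: ifP => // _; rewrite /ip !dot0l !addr0.
- move=> c1 c2 /imsetP[[[d1 e1] f1] _ ->] /imsetP[[[d2 e2] f2] _ ->].
  apply/imsetP; exists ((vadd d1 d2, vadd e1 e2), vadd f1 f2) => //; apply/ffunP => s.
  rewrite !ffunE; case: ifP => _; last by rewrite /addR /zeroR /= addr0.
  rewrite /addR /ip /= !dotDl; congr (_, _); ring.
- move=> [a1 a2] c /imsetP[[[d e] f] _ ->].
  apply/imsetP; exists ((vscale a1 d, vadd (vscale a1 e) (vscale a2 d)), vscale a1 f) => //.
  apply/ffunP => s; rewrite !ffunE; case: (s \in D) => //.
  rewrite /mulR /ip /= !dotDl !dotZl; congr (_, _); ring.
Qed.

Lemma card_code : (#|C| < m)%N -> #|code D| = (q ^ m * (q ^ #|A :|: B| * q ^ #|A|))%N.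
Proof.
move=> Cm; rewrite code_eq card_in_imset; last exact: cw_inj.
rewrite -card_Np -card_vec -cardsT mulnC -cardsX; apply: eq_card => -[[d e] f].
by rewrite !inE andbT.
Qed.

Lemma sum16 (G : (bool * bool) * (bool * bool) -> nat) :
  (\sum_k G k = G ((true, true), (true, true)) + G ((true, true), (true, false)) +
     G ((true, true), (false, true)) + G ((true, true), (false, false)) +
     G ((true, false), (true, true)) + G ((true, false), (true, false)) +
     G ((true, false), (false, true)) + G ((true, false), (false, false)) +
     G ((false, true), (true, true)) + G ((false, true), (true, false)) +
     G ((false, true), (false, true)) + G ((false, true), (false, false)) +
     G ((false, false), (true, true)) + G ((false, false), (true, false)) +
     G ((false, false), (false, true)) + G ((false, false), (false, false)))%N.
Proof.
have P2 (H : bool * bool -> nat) : (\sum_p H p = H (true, true) + H (true, false) + H (false, true) + H (false, false))%N.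
  rewrite (eq_bigr (fun p : bool * bool => H (p.1, p.2))); last by case.
  by rewrite -(pair_bigA _ (fun i j => H (i, j))) !big_bool /= !addnA.
rewrite (eq_bigr (fun p : (bool * bool) * (bool * bool) => G (p.1, p.2))); last by case.
rewrite -(pair_bigA _ (fun i j => G (i, j))) P2 !P2 /= !addnA; lia.
Qed.


End Main.

Lemma arith_f2 (u t y z : nat) :
  ((1 + 0 + y + z) * (1 + u + u + t) + (1 + y) - 2 * ((1 + y) * (1 + u)) =
   t * (1 + y + z) + 2 * u * z + z)%N.
Proof.
have -> : ((1 + 0 + y + z) * (1 + u + u + t) + (1 + y))%N =
          ((t * (1 + y + z) + 2 * u * z + z) + 2 * ((1 + y) * (1 + u)))%N by ring.
by rewrite addnK.
Qed.

Lemma arith_final (b0 b1 b2 b3 b4 : bool) (u t y z : nat) :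
  (b2 * (t * z) + b2 * (t * y) + b2 * t + b2 * (u * z) + b3 * (u * y) + b1 * u +
   b2 * (u * z) + b3 * (u * y) + b1 * u + b2 * z + b4 * y + b0 =
   b0 + b1 * (2 * u) + b2 * (t * (1 + y + z) + 2 * u * z + z) + b3 * (2 * u * y) + b4 * y)%N.
Proof. ring. Qed.

Section Main2.
Variables (F : finFieldType) (m : nat) (A B C : {set 'I_m}).
Local Notation vec := (vec F m).
Local Notation D := (S1 F A B C).
Local Notation q := #|F|.
Local Notation W1v := (W1v F A B C).
Local Notation Whv := (Whv F A B).
Local Notation nde := (nde F A B).
Local Notation nf := (nf F C).
Local Notation Np := (Np F A B).
Local Notation g1 := (g1 A B).
Local Notation g2 := (g2 A B).

Lemma freq_formula w : A != set0 -> B != set0 -> C != set0 -> (#|C| < m)%N ->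
  let a := #|A| in let b := #|B| in let c := #|C| in let ab := #|A :|: B| in
  let W1 := ((q - 1) * q ^ (a + b - 1) * (q ^ m - q ^ c))%N in
  let W2 := (2 * (q - 1) * q ^ (a + b - 1) * (q ^ m - q ^ c))%N in
  let W3 := ((q - 1) * q ^ (a + b - 1) * (2 * q ^ m - q ^ c))%N in
  let W4 := (2 * (q - 1) * q ^ (m + a + b - 1))%N in
  let f1 := (2 * (q ^ (ab - b) - 1))%N in
  let f2 := (q ^ (m + a + ab) + q ^ (m - c) - 2 * q ^ (m - c + ab - b))%N in
  let f3 := (2 * (q ^ (ab - b) - 1) * (q ^ (m - c) - 1))%N in
  let f4 := (q ^ (m - c) - 1)%N in
  freq D (code D) w =
         ((w == 0%N) + (w == W1) * f1 + (w == W2) * f2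
          + (w == W3) * f3 + (w == W4) * f4)%N.
Proof.
move=> A0 B0 C0 Cm a b c ab W1 W2 W3 W4 f1 f2 f3 f4.
rewrite freq_eq // sum16 /Wk /hv /= nf_FT nde_FF nf_FF !muln0 !addn0 !muln1 !mul1n !add0n.
have q1 := q_gt1 F.
have a0 : (0 < a)%N by rewrite card_gt0.
have cm : (q ^ c <= q ^ m)%N by rewrite leq_exp2l //; exact: ltnW.
have eW1 : W1v = W1 by rewrite /W1v /W1 mulnA.
have eW2 : (W1v + W1v)%N = W2.
  by rewrite /W1v /W2 addnn -mul2n !mulnA.
have eW4 : (Whv + Whv)%N = W4.
  by rewrite /Whv /W4 addnn -mul2n mulnA.
have eW3 : (W1v + Whv)%N = W3.
  have e1 : (2 * q ^ m - q ^ c = (q ^ m - q ^ #|C|) + q ^ m)%N.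
    by rewrite mul2n -addnn (addnBAC _ cm).
  have e2 : (q ^ (m + #|A| + #|B| - 1) = q ^ (#|A| + #|B| - 1) * q ^ m)%N.
    by rewrite -expnD; congr (_ ^ _)%N; move: a0; rewrite /a; clear; lia.
  by rewrite /W1v /Whv /W3 e1 e2 -mulnDr -mulnDr mulnA.
rewrite [(Whv + W1v)%N]addnC eW2 eW3 eW4 eW1 !(eq_sym w).
have [H1 H2 H3] := card4 Np g1 g2.
rewrite nde_g1F -/(nde false false) -/(nde false true) nde_FF in H2.
rewrite nde_g2F -/(nde false false) -/(nde true false) nde_FF in H3.
rewrite card_Np -/(nde false false) -/(nde false true) -/(nde true false) -/(nde true true) nde_FF in H1.
have [M1 M2] := nf_sum F C; rewrite nf_FF nf_FT in M1 M2.
have eTF : nde true false = nde false true by apply/eqP; rewrite -(eqn_add2l 1) -H2 -H3.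
have ef1 : f1 = (2 * nde false true)%N by rewrite /f1 /ab /b H2 addKn.
have ef4 : f4 = nf true false by rewrite /f4 /c M2 addKn.
have ef3 : f3 = (2 * nde false true * nf true false)%N by rewrite /f3 /ab /b /c H2 M2 !addKn.
have hb : (#|B| <= #|A :|: B|)%N by rewrite subset_leq_card // subsetUr.
have eMK : (q ^ (m + a + ab) = q ^ m * (q ^ #|A :|: B| * q ^ #|A|))%N.
  rewrite -!expnD /a /ab; congr (_ ^ _)%N; clear; lia.
have eYX : (q ^ (m - c + ab - b) = q ^ (m - #|C|) * q ^ (#|A :|: B| - #|B|))%N.
  rewrite -!expnD /c /ab /b; congr (_ ^ _)%N; clear -hb; lia.
have ef2 : f2 = (nde true true * (1 + nf true false + nf true true) + 2 * nde false true * nf true true + nf true true)%N.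
  by rewrite /f2 eMK eYX H1 M1 M2 H2 eTF arith_f2.
rewrite ef1 ef2 ef3 ef4 eTF; exact: arith_final.
Qed.
End Main2.

Local Close Scope ring_scope.

Lemma abstract_weights (T : finType) (S : {set T}) (le : T -> nat) (z : T) :
  z \in S -> le z = 0 -> #|[set c in S | le c == 0]| = 1 ->
  forall x, (x \in [seq le c | c <- enum S & c != z]) = (x != 0) && (0 < #|[set c in S | le c == x]|).
Proof.
move=> zS lz f0 x; apply/mapP/andP => [[c] |[nz /card_gt0P[c]]].
  rewrite mem_filter mem_enum => /andP[cz cS] ->; split.
    apply/negP => /eqP l0.
    have : (#|[set c; z]| <= #|[set c in S | le c == 0]|)%N.
      by apply: subset_leq_card; apply/subsetP => y; rewrite !inE => /orP[] /eqP ->; rewrite ?cS ?zS ?l0 ?lz.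
    by rewrite cards2 cz f0.
  by apply/card_gt0P; exists c; rewrite inE cS eqxx.
rewrite inE => /andP[cS /eqP lc]; exists c => //.
rewrite mem_filter mem_enum cS andbT; apply: contra nz => /eqP cz.
by rewrite -lc cz lz.
Qed.

Lemma freq_ex (T : finType) (S : {set T}) (le : T -> nat) x :
  (0 < #|[set c in S | le c == x]|)%N -> exists2 c, c \in S & le c = x.
Proof. by move=> /card_gt0P[c]; rewrite inE => /andP[cS /eqP lc]; exists c. Qed.

Lemma weightset (fr : nat -> nat) (W1 W2 W3 W4 f1 f2 f3 f4 : nat) :
  (0 < W1)%N -> (W1 < W2)%N -> (W2 < W3)%N -> (W3 < W4)%N ->
  (forall w, fr w = ((w == 0%N) + (w == W1) * f1 + (w == W2) * f2 + (w == W3) * f3 + (w == W4) * f4)%N) ->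
  forall x, (x != 0%N) && (0 < fr x)%N =
   [|| (x == W1) && (0 < f1)%N, (x == W2) && (0 < f2)%N, (x == W3) && (0 < f3)%N | (x == W4) && (0 < f4)%N].
Proof.
move=> h0 h1 h2 h3 Hf x; rewrite Hf.
case: (x =P 0%N); case: (x =P W1); case: (x =P W2); case: (x =P W3); case: (x =P W4);
  move=> /= *; lia.
Qed.

Lemma ar2 x y r : (2 * x * y * r = x * y * (r + r))%N.
Proof. ring. Qed.
Lemma ar4 x y M : (2 * x * (y * M) = x * y * (M + M))%N.
Proof. ring. Qed.
Lemma chain k R M : (0 < k)%N -> (0 < R)%N -> (R < M)%N ->
  [/\ (0 < k * R)%N, (k * R < k * (R + R))%N, (k * (R + R) < k * (R + M))%N & (k * (R + M) < k * (M + M))%N].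
Proof. move=> k0 R0 RM; rewrite !ltn_pmul2l // muln_gt0 k0 R0; split => //; lia. Qed.

Theorem mainTheorem1 (F : finFieldType) (m : nat) (A B C : {set 'I_m}) :
  let q := #|F| in
  let a := #|A| in let b := #|B| in let c := #|C| in let ab := #|A :|: B| in
  let D := S1 F A B C in
  let Cd := code D in
  let eps := if A \subset B then 2 else 1 in
  let W1 := ((q - 1) * q ^ (a + b - 1) * (q ^ m - q ^ c))%N in
  let W2 := (2 * (q - 1) * q ^ (a + b - 1) * (q ^ m - q ^ c))%N in
  let W3 := ((q - 1) * q ^ (a + b - 1) * (2 * q ^ m - q ^ c))%N in
  let W4 := (2 * (q - 1) * q ^ (m + a + b - 1))%N in
  let f1 := (2 * (q ^ (ab - b) - 1))%N in
  let f2 := (q ^ (m + a + ab) + q ^ (m - c) - 2 * q ^ (m - c + ab - b))%N in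
  let f3 := (2 * (q ^ (ab - b) - 1) * (q ^ (m - c) - 1))%N in
  let f4 := (q ^ (m - c) - 1)%N in
  (2 <= m)%N -> A != set0 -> B != set0 -> C != set0 -> (c < m)%N ->
  [/\ is_linear_code D Cd,
      #|D| = (q ^ (a + b) * (q ^ m - q ^ c))%N,
      #|Cd| = (q ^ (m + a + ab))%N,
      min_lee D Cd (eps * W1)%N &
      ((forall w : nat, freq D Cd w =
         ((w == 0%N) + (w == W1) * f1 + (w == W2) * f2
          + (w == W3) * f3 + (w == W4) * f4)%N) /\
       num_weights D Cd = (if A \subset B then 2 else 4)%N)].
Proof.
move=> q a b c ab D Cd eps W1 W2 W3 W4 f1 f2 f3 f4 m2 A0 B0 C0 Cm.
have Hf w : freq D Cd w = ((w == 0%N) + (w == W1) * f1 + (w == W2) * f2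
          + (w == W3) * f3 + (w == W4) * f4)%N by exact: freq_formula.
have q1 : (1 < q)%N := q_gt1 F.
have a0 : (0 < a)%N by rewrite card_gt0.
have Xp : (0 < q ^ (a + b - 1))%N by rewrite expn_gt0 (ltnW q1).
have cp : (0 < q ^ c)%N by rewrite expn_gt0 (ltnW q1).
have hcm : (q ^ c < q ^ m)%N by rewrite ltn_exp2l.
have kp : (0 < (q - 1) * q ^ (a + b - 1))%N by rewrite muln_gt0 subn_gt0 q1 Xp.
have R0 : (0 < q ^ m - q ^ c)%N by rewrite subn_gt0.
have RM : (q ^ m - q ^ c < q ^ m)%N by move: cp hcm; clear; lia.
have [h0 h1 h2 h3] := chain kp R0 RM.
have eW2 : W2 = ((q - 1) * q ^ (a + b - 1) * ((q ^ m - q ^ c) + (q ^ m - q ^ c)))%N by rewrite /W2 ar2.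
have eW3 : W3 = ((q - 1) * q ^ (a + b - 1) * ((q ^ m - q ^ c) + q ^ m))%N.
  by rewrite /W3 mul2n -addnn (addnBAC _ (ltnW hcm)).
have eW4 : W4 = ((q - 1) * q ^ (a + b - 1) * (q ^ m + q ^ m))%N.
  rewrite /W4 -ar4 -expnD; congr (_ * _ ^ _)%N; rewrite /a /b; move: a0; rewrite /a; clear; lia.
rewrite -eW2 -eW3 -eW4 in h1 h2 h3.
have {}h0 : (0 < W1)%N by [].
have {}h1 : (W1 < W2)%N by [].
have Y1 : (1 < q ^ (m - c))%N by rewrite -{1}(expn0 q) ltn_exp2l // subn_gt0.
have f4p : (0 < f4)%N by rewrite /f4 subn_gt0.
have hb : (b <= ab)%N by rewrite subset_leq_card // subsetUr.
have f2p : (0 < f2)%N.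
  have e : (2 * q ^ (m - c + ab - b) <= q ^ (m + a + ab))%N.
    apply: (@leq_trans (q * q ^ (m - c + ab - b))); first by rewrite leq_mul2r q1 orbT.
    rewrite -expnS leq_exp2l //; move: hb a0; clear; lia.
  rewrite /f2; move: e Y1; clear; lia.
have WS := weightset h0 h1 h2 h3 Hf.
have zC : zero_word F m \in Cd by case: (lin_code F A B C).
have lz : lee D (zero_word F m) = 0%N.
  by rewrite /lee big1 // => s _; rewrite ffunE /leeR /= eqxx addr0 eqxx.
have n0 x : (0 < x)%N -> (0 == x) = false by case: x.
have f0 : #|[set c0 in Cd | lee D c0 == 0%N]| = 1%N.
  have := Hf 0%N; rewrite /freq eqxx !n0 //; [lia | lia | lia].
have memS x : (x \in [seq lee D c0 | c0 <- enum Cd & c0 != zero_word F m]) =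
   [|| (x == W1) && (0 < f1)%N, (x == W2) && (0 < f2)%N, (x == W3) && (0 < f3)%N | (x == W4) && (0 < f4)%N].
  by rewrite (abstract_weights zC lz f0) -WS.
have ncz c0 : c0 \in Cd -> lee D c0 != 0%N -> c0 != zero_word F m.
  by move=> _; apply: contra => /eqP ->; rewrite lz.
have inS c0 : c0 \in Cd -> c0 != zero_word F m -> lee D c0 \in [seq lee D c1 | c1 <- enum Cd & c1 != zero_word F m].
  by move=> cC cz; apply: map_f; rewrite mem_filter cz mem_enum.
have e2W : (2 * W1)%N = W2 by rewrite /W2 /W1 !mulnA.
rewrite /num_weights; set s := [seq lee D c0 | c0 <- enum Cd & c0 != zero_word F m].
case: (boolP (A \subset B)) => AB.
  have eab : ab = b by rewrite /ab (setUidPr AB).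
  have f1z : f1 = 0%N by rewrite /f1 eab subnn expn0 subnn muln0.
  have f3z : f3 = 0%N by rewrite /f3 eab subnn expn0 subnn muln0 mul0n.
  rewrite /eps AB /= e2W.
  clearbody W1 W2 W3 W4.
  split; [exact: lin_code | by rewrite card_D -expnD | rewrite card_code // -!expnD; congr (_ ^ _)%N; rewrite /a /ab; clear; lia | | ].
  - split.
      have : W2 \in s by rewrite memS eqxx f2p /= orbT.
      case/mapP => c0; rewrite mem_filter mem_enum => /andP[cz cC] e.
      by exists c0 => //; split.
    move=> c0 cC cz; have := inS c0 cC cz; rewrite memS f1z f3z ltnn !andbF /=.
    by move=> /orP[] /andP[/eqP -> _]; lia.
  - split; first exact: Hf.
    have P : perm_eq (undup s) [:: W2; W4].
      apply: uniq_perm; first exact: undup_uniq.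
        by rewrite /= inE andbT; move: h2 h3; clear; lia.
      by move=> x; rewrite mem_undup memS f1z f3z !inE ltnn !andbF f2p f4p !andbT.
    by rewrite (perm_size P).
have hab : (b < ab)%N.
  rewrite /ab /b; apply: proper_card; rewrite properE subsetUr subUset negb_and AB.
  done.
have X1 : (1 < q ^ (ab - b))%N by rewrite -{1}(expn0 q) ltn_exp2l // subn_gt0.
have f1p : (0 < f1)%N by rewrite /f1 muln_gt0 subn_gt0 X1.
have f3p : (0 < f3)%N by rewrite /f3 !muln_gt0 !subn_gt0 X1 Y1.
rewrite /eps (negbTE AB) /= mul1n.
clearbody W1 W2 W3 W4.
split; [exact: lin_code | by rewrite card_D -expnD | rewrite card_code // -!expnD; congr (_ ^ _)%N; rewrite /a /ab; clear; lia | | ].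
- split.
    have : W1 \in s by rewrite memS eqxx f1p.
    case/mapP => c0; rewrite mem_filter mem_enum => /andP[cz cC] e.
    by exists c0 => //; split.
  move=> c0 cC cz; have := inS c0 cC cz; rewrite memS f1p f2p f3p f4p !andbT.
  by move=> /or4P[] /eqP ->; lia.
- split; first exact: Hf.
  have P : perm_eq (undup s) [:: W1; W2; W3; W4].
    apply: uniq_perm; first exact: undup_uniq.
      by rewrite /= !inE !andbT; move: h0 h1 h2 h3; clear; lia.
    by move=> x; rewrite mem_undup memS f1p f2p f3p f4p !andbT !inE.
  by rewrite (perm_size P).
Qed.
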